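(* Let $B$ be a board and $S$ a set of sinks such that every region of $B$ contains a sink, and let $T$ be a minimum-weight arborescence (converging to the root $r$) of the extended large tilt graph $\hat G_L(B,S)$. If $(p_1,q_1)$ and $(p_2,q_2)$ are two distinct inverse edges in $T$ whose heads $q_1$ and $q_2$ lie in the same row segment $R$, then at most one of the tails $p_1,p_2$ lies in $R$.
   Context: Pixels are unit squares indexed by $\mathbb{Z}^2$. A board $B=(V,E)$ is a finite subgraph of the square grid graph on $\mathbb{Z}^2$; regions are its connected components; its boundary consists of pixel sides not shared with a neighbouring pixel joined by an edge of $E$. $S\subseteq V$ are sinks. For a pixel $p$, its row (column) segment is the maximal set of pixels reachable from $p$ using only horizontal (vertical) edges of $E$; $p^\ell,p^r$ are the leftmost/rightmost pixels of its row segment and $p^u,p^d$ the topmost/bottommost pixels of its column segment. The full tilt graph $G_F(B)$ has vertex set $V$ and edges $(p,p^x)$ for $x\in\{\ell,r,u,d\}$, $p^x\ne p$. A corner pixel is a pixel $p$ with $p=p^x=p^y$ for some $x\in\{\ell,r\}$, $y\in\{u,d\}$. The large tilt graph $G_L(B,S)$ is the subgraph of $G_F(B)$ induced by the vertex set consisting of (i) all pixels reachable in $G_F(B)$ from corner pixels, (ii) every sink $s$ and $s^\ell,s^r,s^u,s^d$, (iii) for every reflex corner of the boundary, the endpoints of the row and column segments of the pixels incident to that corner, (iv) all pixels on the intersection of a row segment and a column segment each containing a pixel included in (i)–(iii). Extended graph: for a directed graph $G$ with sinks $S$, $\hat G$ has vertex set $V(G)\cup\{r\}$ with new root $r$ and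 edges: every edge of $G$ with weight $0$; for every edge $(p,q)$ of $G$ such that $(q,p)$ is not an edge of $G$, the inverse edge $(q,p)$ with weight $1$; and $(s,r)$ with weight $0$ for each $s\in S$. An arborescence converging to $r$ is a spanning subgraph in which every vertex other than $r$ has exactly one outgoing edge and a directed path to $r$; its weight is the sum of its edge weights. *)

(* Defs.v *)
From HB Require Import structures.
From mathcomp Require Import all_boot all_order all_algebra.
Set Implicit Arguments. Unset Strict Implicit. Unset Printing Implicit Defensive.
Import Order.TTheory GRing.Theory Num.Theory.

(* Pixels are indexed by Z^2: pixel (x,y) is the unit square [x,x+1]x[y,y+1].
   "up" means increasing y. *)
Definition pixel := (int * int)%type.

Local Open Scope ring_scope.

Definition grid_adj (p q : pixel) : bool :=
  ((p.1 == q.1) && (`|p.2 - q.2| == 1)) || ((p.2 == q.2) && (`|p.1 - q.1| == 1)).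

Definition is_board (V : seq pixel) (E : rel pixel) : Prop :=
  (forall p q, E p q -> [/\ p \in V, q \in V & grid_adj p q]) /\
  (forall p q, E p q = E q p).

(* lattice points touching a pixel, and pixels around a lattice point (in cyclic order) *)
Definition pix_corners (p : pixel) : seq pixel :=
  [:: p; (p.1 + 1, p.2); (p.1 + 1, p.2 + 1); (p.1, p.2 + 1)].
Definition quads (v : pixel) : seq pixel :=
  [:: (v.1 - 1, v.2 - 1); (v.1, v.2 - 1); (v.1, v.2); (v.1 - 1, v.2)].

Local Close Scope ring_scope.

Section Board.
Variables (V : seq pixel) (E : rel pixel).
Local Notation pix := (seq_sub V).

Definition Erel (a b : pix) : bool := E (val a) (val b).
Definition hedge (a b : pix) : bool := E (val a) (val b) && ((val a).2 == (val b).2).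
Definition vedge (a b : pix) : bool := E (val a) (val b) && ((val a).1 == (val b).1).

Definition rowseg (a b : pix) : bool := connect hedge a b.
Definition colseg (a b : pix) : bool := connect vedge a b.

Definition isLeft (a b : pix) : bool :=
  rowseg a b && [forall c, rowseg a c ==> ((val b).1 <= (val c).1)%R].
Definition isRight (a b : pix) : bool :=
  rowseg a b && [forall c, rowseg a c ==> ((val c).1 <= (val b).1)%R].
Definition isUp (a b : pix) : bool :=
  colseg a b && [forall c, colseg a c ==> ((val c).2 <= (val b).2)%R].
Definition isDown (a b : pix) : bool :=
  colseg a b && [forall c, colseg a c ==> ((val b).2 <= (val c).2)%R].

Definition endpoint (a b : pix) : bool :=
  [|| isLeft a b, isRight a b, isUp a b | isDown a b].

Definition tilt (a b : pix) : bool := (a != b) && endpoint a b.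

Definition corner_pixel (a : pix) : bool :=
  (isLeft a a || isRight a a) && (isUp a a || isDown a a).

Definition bside (p q : pixel) : bool := ((p \in V) || (q \in V)) && ~~ E p q.

(* reflex corner of the boundary at lattice point v: three consecutive
   quadrants around v are pixels of B joined by edges (interior angle >= 270
   degrees) and at least one boundary side is incident to v. *)
Definition reflex (v : pixel) : bool :=
  let Q k := nth (0%R, 0%R) (quads v) (k %% 4) in
  [exists k : 'I_4,
    [&& Q k \in V, Q k.+1 \in V, Q k.+2 \in V, E (Q k) (Q k.+1),
        E (Q k.+1) (Q k.+2) &
        bside (Q k.+2) (Q k.+3) || bside (Q k.+3) (Q k)]].

Section Sinks.
Variable S : {set pix}.

Definition VL1 (a : pix) : bool := [exists c, corner_pixel c && connect tilt c a].
Definition VL2 (a : pix) : bool := [exists s in S, (s == a) || endpoint s a].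
Definition VL3 (a : pix) : bool :=
  [exists p : pix, has reflex (pix_corners (val p)) && endpoint p a].
Definition VLbase (a : pix) : bool := [|| VL1 a, VL2 a | VL3 a].
Definition VL4 (a : pix) : bool :=
  [exists b1, exists b2, [&& VLbase b1, VLbase b2, rowseg b1 a & colseg b2 a]].
Definition VL (a : pix) : bool := VLbase a || VL4 a.

Definition tiltL (a b : pix) : bool := [&& VL a, VL b & tilt a b].
Definition invL (a b : pix) : bool := tiltL b a && ~~ tiltL a b.

(* extended graph: vertices Some a (a in VL) and the root None *)
Definition ext_edge (u w : option pix) : bool :=
  match u, w with
  | Some a, Some b => tiltL a b || invL a b
  | Some a, None => a \in S
  | None, _ => false
  end.
Definition ext_weight (u w : option pix) : nat :=
  match u, w with
  | Some a, Some b => nat_of_bool (invL a b)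
  | _, _ => 0
  end.

(* an arborescence converging to the root, given by the unique outgoing edge
   (a, f a) of each non-root vertex a *)
Definition tstep (f : pix -> option pix) (u : option pix) : option pix :=
  if u is Some a then f a else None.
Definition is_arborescence (f : pix -> option pix) : Prop :=
  forall a, VL a ->
    ext_edge (Some a) (f a) /\ exists n, iter n (tstep f) (Some a) = None.
Definition arb_weight (f : pix -> option pix) : nat :=
  \sum_(a | VL a) ext_weight (Some a) (f a).
Definition min_arborescence (f : pix -> option pix) : Prop :=
  is_arborescence f /\
  forall g, is_arborescence g -> arb_weight f <= arb_weight g.

End Sinks.

Definition every_region_has_sink (S : {set pix}) : Prop :=
  forall a : pix, exists2 s, s \in S & connect Erel a s.

End Board.

(* Main.v *)
Require Import Defs.
From mathcomp Require Import all_boot all_order all_algebra.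
From Stdlib Require Classical_Prop.
Set Implicit Arguments. Unset Strict Implicit. Unset Printing Implicit Defensive.
Import Order.TTheory GRing.Theory Num.Theory.

Lemma rowseg_y (V : seq pixel) (E : rel pixel) (a b : seq_sub V) : rowseg E a b -> (val a).2 = (val b).2.
Proof.
move/connectP => [s pth ->]; elim: s a pth => //= c s IH a /andP [/andP[_ /eqP h] pth].
by rewrite h; exact: IH.
Qed.

Lemma colseg_x (V : seq pixel) (E : rel pixel) (a b : seq_sub V) : colseg E a b -> (val a).1 = (val b).1.
Proof.
move/connectP => [s pth ->]; elim: s a pth => //= c s IH a /andP [/andP[_ /eqP h] pth].
by rewrite h; exact: IH.
Qed.

Lemma rowseg_sym (V : seq pixel) (E : rel pixel) : is_board V E -> forall a b : seq_sub V, rowseg E a b = rowseg E b a.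
Proof.
move=> [_ Es]; apply: sym_connect_sym => a b; by rewrite /hedge Es eq_sym.
Qed.

Lemma rowseg_eq (V : seq pixel) (E : rel pixel) (a c : seq_sub V) : is_board V E -> rowseg E a c ->
  forall x, rowseg E c x = rowseg E a x.
Proof.
move=> hB ac x; apply/idP/idP => h.
  exact: connect_trans ac h.
rewrite (rowseg_sym hB) in ac; exact: connect_trans ac h.
Qed.

Lemma isLeft_tr (V : seq pixel) (E : rel pixel) (a c b : seq_sub V) : is_board V E -> rowseg E a c ->
  isLeft E c b = isLeft E a b.
Proof.
move=> hB ac; rewrite /isLeft (rowseg_eq hB ac); congr (_ && _).
by apply: eq_forallb => x; rewrite (rowseg_eq hB ac).
Qed.

Lemma isRight_tr (V : seq pixel) (E : rel pixel) (a c b : seq_sub V) : is_board V E -> rowseg E a c ->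
  isRight E c b = isRight E a b.
Proof.
move=> hB ac; rewrite /isRight (rowseg_eq hB ac); congr (_ && _).
by apply: eq_forallb => x; rewrite (rowseg_eq hB ac).
Qed.

Lemma pix_eq (V : seq pixel) (a b : seq_sub V) : (val a).1 = (val b).1 -> (val a).2 = (val b).2 -> a = b.
Proof.
move=> h1 h2; apply: val_inj.
by rewrite [val a]surjective_pairing [val b]surjective_pairing h1 h2.
Qed.

Lemma row_end (V : seq pixel) (E : rel pixel) (q p : seq_sub V) : tilt E q p -> rowseg E q p ->
  isLeft E q p || isRight E q p.
Proof.
case/andP=> nqp; rewrite /endpoint => /or4P [h|h|/andP[c _]|/andP[c _]] r;
  rewrite ?h ?orbT //.
all: by case/negP: nqp; apply/eqP; apply: pix_eq; [exact: colseg_x c | exact: rowseg_y r].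
Qed.

Lemma two_ends (V : seq pixel) (E : rel pixel) (q p1 p2 : seq_sub V) : p1 != p2 ->
  rowseg E q p1 -> rowseg E q p2 ->
  isLeft E q p1 || isRight E q p1 -> isLeft E q p2 || isRight E q p2 ->
  (isLeft E q p1 && isRight E q p2) || (isRight E q p1 && isLeft E q p2).
Proof.
move=> np r1 r2.
have ey : (val p1).2 = (val p2).2 by rewrite -(rowseg_y r1) (rowseg_y r2).
case/orP => h1; case/orP => h2; rewrite ?h1 ?h2 ?orbT //;
case/negP: np; apply/eqP; apply: pix_eq => //; apply/le_anti/andP.
- move/andP: h1 => [_ /forallP /(_ p2)]; rewrite r2 /= => ->.
  by move/andP: h2 => [_ /forallP /(_ p1)]; rewrite r1 /= => ->.
- move/andP: h2 => [_ /forallP /(_ p1)]; rewrite r1 /= => ->.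
  by move/andP: h1 => [_ /forallP /(_ p2)]; rewrite r2 /= => ->.
Qed.

Lemma agree (V : seq pixel) (f g : seq_sub V -> option (seq_sub V)) p :
  (forall a, a != p -> f a = g a) ->
  forall n x, (forall k, k < n -> iter k (tstep f) x != Some p) ->
  iter n (tstep g) x = iter n (tstep f) x.
Proof.
move=> fg; elim=> // n IH x hk; rewrite !iterS IH; last first.
  by move=> k kn; apply: hk; exact: ltnW.
have := hk n (ltnSn n); case: (iter n (tstep f) x) => [a|] //= ne.
by rewrite fg // ; apply: contra ne => /eqP ->.
Qed.

Lemma iter_None (V : seq pixel) (f : seq_sub V -> option (seq_sub V)) m :
  iter m (tstep f) None = None.
Proof. by elim: m => //= m ->. Qed.

Lemma improve (V : seq pixel) (E : rel pixel) (S : {set seq_sub V})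
    (T : seq_sub V -> option (seq_sub V)) p p' q :
  is_arborescence E S T -> VL E S p -> tiltL E S p p' -> T p = Some q -> invL E S p q ->
  (forall k, iter k (tstep T) (Some p') != Some p) ->
  exists g, is_arborescence E S g /\ arb_weight E S g < arb_weight E S T.
Proof.
move=> hT vp tpp' Tp ipq hk.
pose g a := if a == p then Some p' else T a.
have gT a : a != p -> T a = g a by rewrite /g => /negbTE ->.
have vp' : VL E S p' by case/and3P: tpp'.
exists g; split.
  move=> a va; split.
    rewrite /g; case: eqP => [->|_]; first by rewrite /= tpp'.
    by case: (hT a va).
  have [n hn] := (hT a va).2.
  have [hit|nohit] := boolP [exists k : 'I_n, iter k (tstep T) (Some a) == Some p].
    have exP : exists k, iter k (tstep T) (Some a) == Some p.
      by case/existsP: hit => k hk'; exists k.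
    case: (ex_minnP exP) => k hk1 kmin.
    have [m hm] := (hT p' vp').2.
    have e1 : iter k (tstep g) (Some a) = Some p.
      rewrite (agree gT) ?(eqP hk1) //.
      move=> j jk; apply/negP => hj; have := kmin j hj; by rewrite leqNgt jk.
    exists (m + k.+1); rewrite iterD iterS e1 /=; have -> : g p = Some p' by rewrite /g eqxx.
    rewrite (agree gT) ?hm // => *; exact: hk.
  exists n; rewrite (agree gT) // => k kn; apply/negP => hk2.
  by case/existsP: nohit; exists (Ordinal kn).
rewrite /arb_weight (bigD1 p vp) [X in _ < X](bigD1 p vp) /=.
rewrite /g eqxx Tp ipq.
have -> : invL E S p p' = false by rewrite /invL tpp' andbF.
rewrite add0n add1n ltnS; apply: eq_leq; apply: eq_bigr => a /andP [_ ap].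
by rewrite (negbTE ap).
Qed.

Lemma no_cycle (V : seq pixel) (E : rel pixel) (S : {set seq_sub V})
    (T : seq_sub V -> option (seq_sub V)) a b k j :
  is_arborescence E S T -> VL E S a -> a != b ->
  iter k (tstep T) (Some b) = Some a -> iter j (tstep T) (Some a) = Some b -> False.
Proof.
move=> hT va ab hk hj.
have cyc t : iter (t * (k + j)) (tstep T) (Some a) = Some a.
  elim: t => [|t IH] //; by rewrite mulSn iterD IH iterD hj hk.
have [n hn] := (hT a va).2.
case: k hk cyc => [|k] hk cyc.
  by move: hk => /= [] ba; rewrite ba eqxx in ab.
have := cyc n; rewrite -(subnK (_ : n <= n * (k.+1 + j))).
  by rewrite iterD hn iter_None.
by rewrite leq_pmulr // addSn.
Qed.

Theorem mainTheorem6 (V : seq pixel) (E : rel pixel) (S : {set seq_sub V})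
    (T : seq_sub V -> option (seq_sub V)) :
  is_board V E ->
  every_region_has_sink E S ->
  min_arborescence E S T ->
  forall p1 q1 p2 q2 : seq_sub V,
    VL E S p1 -> VL E S p2 ->
    T p1 = Some q1 -> T p2 = Some q2 ->
    invL E S p1 q1 -> invL E S p2 q2 ->
    p1 != p2 ->
    rowseg E q1 q2 ->
    ~~ (rowseg E q1 p1 && rowseg E q1 p2).
Proof.
move=> hB _ [hT hmin] p1 q1 p2 q2 v1 v2 T1 T2 i1 i2 np r12.
apply/negP => /andP [r1 r2].
have t1 : tilt E q1 p1 by case/andP: i1 => /and3P [_ _ ->].
have t2 : tilt E q2 p2 by case/andP: i2 => /and3P [_ _ ->].
have e1 := row_end t1 r1.
have r2' : rowseg E q2 p2.
  have r21 : rowseg E q2 q1 by rewrite (rowseg_sym hB).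
  exact: connect_trans r21 r2.
have e2 := row_end t2 r2'.
rewrite (isLeft_tr _ hB r12) (isRight_tr _ hB r12) in e2.
have tt : tilt E p1 p2 && tilt E p2 p1.
  rewrite /tilt np eq_sym np /endpoint.
  rewrite (isLeft_tr _ hB r1) (isRight_tr _ hB r1) (isLeft_tr _ hB r2) (isRight_tr _ hB r2).
  by case/orP: (two_ends np r1 r2 e1 e2) => /andP [-> ->]; rewrite !orbT.
case/andP: tt => t12 t21.
have tl12 : tiltL E S p1 p2 by rewrite /tiltL v1 v2 t12.
have tl21 : tiltL E S p2 p1 by rewrite /tiltL v1 v2 t21.
have fin : forall g, is_arborescence E S g /\ arb_weight E S g < arb_weight E S T -> False.
  by move=> g [hg lt]; have := hmin g hg; rewrite leqNgt lt.
case: (Classical_Prop.classic (exists k, iter k (tstep T) (Some p2) = Some p1)).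
  move=> [k hk].
  have [g hg] : exists g, is_arborescence E S g /\ arb_weight E S g < arb_weight E S T.
    apply: (improve hT v2 tl21 T2 i2) => j; apply/eqP => hj.
    exact: (no_cycle hT v1 np hk hj).
  exact: fin hg.
move=> nh.
have [g hg] : exists g, is_arborescence E S g /\ arb_weight E S g < arb_weight E S T.
  apply: (improve hT v1 tl12 T1 i1) => j; apply/eqP => hj; apply: nh; by exists j.
exact: fin hg.
Qed.
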